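(* Let $p\colon(0,\infty)\to\mathbb{R}$ be smooth with $p'>0$, $A(\rho)=\rho^{-1}\sqrt{p'(\rho)}$, and let $\alpha_0,\alpha_1,\alpha_2,\alpha_3$ be real constants with $\alpha_2\neq0$. Let $G$ be an antiderivative of $\rho\mapsto A(\rho)^2(\rho+\alpha_3)$ on an interval $I\subset(0,\infty)$ not containing $-\alpha_3$. For $(\rho,t)\in I\times\mathbb{R}$ define $$U(\rho,t)=\frac{\alpha_2\rho t+\alpha_1\rho+\alpha_0}{\rho+\alpha_3},$$ $$g(\rho,t)=-\frac{G(\rho)}{\alpha_2}+\frac{\alpha_2^2t^2\rho(\rho+2\alpha_3)+2t\alpha_2\bigl(\alpha_3(\alpha_0+2\alpha_1\rho)+\alpha_1\rho^2\bigr)-(\alpha_0-\alpha_1\alpha_3)^2}{2\alpha_2(\rho+\alpha_3)^2}.$$ Then the surface $$N=\{(t,x,u,\rho)=(t,\,g(\rho,t),\,U(\rho,t),\,\rho):(\rho,t)\in I\times\mathbb{R}\}\subset E$$ is a multivalued solution of the system $\rho_t+(\rho u)_x=0$, $u_t+uu_x+\frac{p'(\rho)}{\rho}\rho_x=0$, i.e. $\omega_1|_N=\omega_2|_N=0$. Equivalently, the density is given implicitly by $x=g(\rho,t)$ and the velocity by $u=\frac{\alpha_2\rho t+\alpha_1\rho+\alpha_0}{\rho+\alpha_3}$.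
   Context: $E$ is the zero-jet space with coordinates $(t,x,u,\rho)$, $\rho>0$, and $\omega_1=\rho\,dt\wedge du+u\,dt\wedge d\rho-dx\wedge d\rho$, $\omega_2=u\,dt\wedge du+\frac{p'(\rho)}{\rho}dt\wedge d\rho-dx\wedge du$. A 2-dimensional submanifold $N\subset E$ is called a multivalued solution of the system if $\omega_1|_N=\omega_2|_N=0$; where $N$ projects diffeomorphically onto the $(t,x)$-plane it is the graph of a classical solution $(u(t,x),\rho(t,x))$. *)

(* Defs.v *)
From Stdlib Require Export Reals List.
From Coquelicot Require Export Coquelicot.
Open Scope R_scope.

Definition d1 (f : R -> R -> R) (r s : R) : R := Derive (fun r' => f r' s) r.
Definition d2 (f : R -> R -> R) (r s : R) : R := Derive (fun s' => f r s') s.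

(* Coefficient of dr/\ds in the pullback of da/\db, where a b are the
   coordinate functions composed with the parametrization. *)
Definition wedge_pb (a b : R -> R -> R) (r s : R) : R :=
  d1 a r s * d2 b r s - d2 a r s * d1 b r s.

(* Pullback (coefficient of dr/\ds) of
   omega_1 = rho dt/\du + u dt/\drho - dx/\drho  along
   (r,s) |-> (t,x,u,rho) = (T r s, X r s, U r s, Rh r s). *)
Definition omega1_pb (T X U Rh : R -> R -> R) (r s : R) : R :=
  Rh r s * wedge_pb T U r s + U r s * wedge_pb T Rh r s - wedge_pb X Rh r s.

(* Pullback of omega_2 = u dt/\du + p'(rho)/rho dt/\drho - dx/\du ,
   dp being p'. *)
Definition omega2_pb (dp : R -> R) (T X U Rh : R -> R -> R) (r s : R) : R :=
  U r s * wedge_pb T U r s + dp (Rh r s) / Rh r s * wedge_pb T Rh r s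
  - wedge_pb X U r s.

(* A parametrized surface Phi = (T,X,U,Rh) : D -> E (D subset of R^2) whose
   image N is a 2-dimensional (embedded, via injectivity + immersion)
   submanifold of E = {rho > 0} on which omega_1 and omega_2 restrict to 0. *)
Definition multivalued_solution (dp : R -> R) (D : R -> R -> Prop)
  (T X U Rh : R -> R -> R) : Prop :=
  (forall r s, D r s -> 0 < Rh r s) /\
  (forall r s, D r s ->
     forall f, (f = T \/ f = X \/ f = U \/ f = Rh) ->
       ex_derive (fun r' => f r' s) r /\ ex_derive (fun s' => f r s') s) /\
  (forall r s r' s', D r s -> D r' s' ->
     T r s = T r' s' -> X r s = X r' s' -> U r s = U r' s' -> Rh r s = Rh r' s' ->
     r = r' /\ s = s') /\
  (forall r s, D r s ->
     exists a b, In a (T :: X :: U :: Rh :: nil) /\ In b (T :: X :: U :: Rh :: nil)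
       /\ wedge_pb a b r s <> 0) /\
  (forall r s, D r s -> omega1_pb T X U Rh r s = 0) /\
  (forall r s, D r s -> omega2_pb dp T X U Rh r s = 0).

Definition Afun (p : R -> R) (r : R) : R := sqrt (Derive p r) / r.

Definition Ufun (a0 a1 a2 a3 : R) (r t : R) : R :=
  (a2 * r * t + a1 * r + a0) / (r + a3).

Definition gfun (G : R -> R) (a0 a1 a2 a3 : R) (r t : R) : R :=
  - G r / a2
  + (a2 ^ 2 * t ^ 2 * r * (r + 2 * a3)
     + 2 * t * a2 * (a3 * (a0 + 2 * a1 * r) + a1 * r ^ 2)
     - (a0 - a1 * a3) ^ 2)
    / (2 * a2 * (r + a3) ^ 2).

(* Main.v *)
Require Import Defs.
From Stdlib Require Import Lra Field.

Section S.
Variables (G : R -> R) (a0 a1 a2 a3 : R).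
Definition Nf r t := a2 ^ 2 * t ^ 2 * r * (r + 2 * a3)
     + 2 * t * a2 * (a3 * (a0 + 2 * a1 * r) + a1 * r ^ 2)
     - (a0 - a1 * a3) ^ 2.
Definition Df r := 2 * a2 * (r + a3) ^ 2.

Lemma dU1 r s : r + a3 <> 0 ->
  is_derive (fun r' => Ufun a0 a1 a2 a3 r' s) r
   (((a2 * s + a1) * (r + a3) - (a2 * r * s + a1 * r + a0)) / (r + a3) ^ 2).
Proof. intro H. unfold Ufun. auto_derive. auto. field. auto. Qed.

Lemma dU2 r s : r + a3 <> 0 ->
  is_derive (fun s' => Ufun a0 a1 a2 a3 r s') s (a2 * r / (r + a3)).
Proof. intro H. unfold Ufun. auto_derive. auto. field. auto. Qed.

Lemma dg1 r s g : r + a3 <> 0 -> a2 <> 0 -> is_derive G r g ->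
  is_derive (fun r' => gfun G a0 a1 a2 a3 r' s) r
   (- g / a2 + ((a2^2 * s^2 * (2 * r + 2 * a3) + 2 * s * a2 * (2 * a1 * a3 + 2 * a1 * r)) / Df r
      - Nf r s * (2 * 2 * a2 * (r + a3)) / (Df r) ^ 2)).
Proof.
  intros H H2 HG. unfold gfun, Df, Nf.
  auto_derive.
  - split. exists g; exact HG. split; auto. rewrite Rmult_1_r. apply Rmult_integral_contrapositive_currified. lra. apply Rmult_integral_contrapositive_currified; auto.
  - replace (Derive (fun x => G x) r) with g by (symmetry; apply is_derive_unique; exact HG). field. auto.
Qed.

Lemma dg2 r s : r + a3 <> 0 -> a2 <> 0 ->
  is_derive (fun s' => gfun G a0 a1 a2 a3 r s') s
   ((2 * a2^2 * s * r * (r + 2 * a3) + 2 * a2 * (a3 * (a0 + 2 * a1 * r) + a1 * r^2)) / Df r).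
Proof.
  intros H H2. unfold gfun, Df.
  auto_derive. exact I. field. auto.
Qed.
End S.

Lemma DU1 a0 a1 a2 a3 r s : r + a3 <> 0 ->
  Derive (fun r' : R => Ufun a0 a1 a2 a3 r' s) r =
   (((a2 * s + a1) * (r + a3) - (a2 * r * s + a1 * r + a0)) / (r + a3) ^ 2).
Proof. intro H. apply is_derive_unique. apply dU1; auto. Qed.
Lemma DU2 a0 a1 a2 a3 r s : r + a3 <> 0 ->
  Derive (fun s' : R => Ufun a0 a1 a2 a3 r s') s = a2 * r / (r + a3).
Proof. intro H. apply is_derive_unique. apply dU2; auto. Qed.
Lemma DG1 G a0 a1 a2 a3 r s g : r + a3 <> 0 -> a2 <> 0 -> is_derive G r g ->
  Derive (fun r' : R => gfun G a0 a1 a2 a3 r' s) r =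
   (- g / a2 + ((a2^2 * s^2 * (2 * r + 2 * a3) + 2 * s * a2 * (2 * a1 * a3 + 2 * a1 * r)) / Df a2 a3 r
      - Nf a0 a1 a2 a3 r s * (2 * 2 * a2 * (r + a3)) / (Df a2 a3 r) ^ 2)).
Proof. intros. apply is_derive_unique. apply dg1; auto. Qed.
Lemma DG2 G a0 a1 a2 a3 r s : r + a3 <> 0 -> a2 <> 0 ->
  Derive (fun s' : R => gfun G a0 a1 a2 a3 r s') s =
   ((2 * a2^2 * s * r * (r + 2 * a3) + 2 * a2 * (a3 * (a0 + 2 * a1 * r) + a1 * r^2)) / Df a2 a3 r).
Proof. intros. apply is_derive_unique. apply dg2; auto. Qed.

Theorem mainTheorem3
  (p : R -> R)
  (Hsmooth : forall (n : nat) (x : R), 0 < x -> ex_derive_n p n x)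
  (Hpos : forall x : R, 0 < x -> 0 < Derive p x)
  (a0 a1 a2 a3 : R) (Ha2 : a2 <> 0)
  (lo hi : Rbar)
  (Hlo : Rbar_le (Finite 0) lo) (Hlohi : Rbar_lt lo hi)
  (Hnot : ~ (Rbar_lt lo (Finite (- a3)) /\ Rbar_lt (Finite (- a3)) hi))
  (G : R -> R)
  (HG : forall r : R, Rbar_lt lo (Finite r) -> Rbar_lt (Finite r) hi ->
        is_derive G r (Afun p r ^ 2 * (r + a3))) :
  multivalued_solution (Derive p)
    (fun r t => Rbar_lt lo (Finite r) /\ Rbar_lt (Finite r) hi)
    (fun r t => t) (gfun G a0 a1 a2 a3) (Ufun a0 a1 a2 a3) (fun r t => r).
Proof.
  assert (Hr0 : forall r, Rbar_lt lo (Finite r) -> 0 < r).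
  { intros r H. destruct lo; simpl in *; lra. }
  assert (Hr3 : forall r, Rbar_lt lo (Finite r) -> Rbar_lt (Finite r) hi -> r + a3 <> 0).
  { intros r H1 H2 E. apply Hnot. replace (- a3) with r by lra. auto. }
  assert (DT1 : forall r s : R, Derive (fun _ : R => s) r = 0).
  { intros. apply is_derive_unique. auto_derive; auto. }
  assert (DT2 : forall s : R, Derive (fun s' : R => s') s = 1).
  { intros. apply is_derive_unique. auto_derive; auto. }
  assert (DR1 : forall r : R, Derive (fun r' : R => r') r = 1).
  { intros. apply is_derive_unique. auto_derive; auto. }
  assert (DR2 : forall r s : R, Derive (fun _ : R => r) s = 0).
  { intros. apply is_derive_unique. auto_derive; auto. }
  split; [|split; [|split; [|split; [|split]]]].
  - intros r s [H1 H2]. auto.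
  - intros r s [H1 H2] f Hf. pose proof (Hr3 r H1 H2) as Hn.
    destruct Hf as [ -> | [ -> | [ -> | -> ] ] ]; split.
    all: try (auto_derive; auto; fail).
    + eexists. apply dg1; eauto.
    + eexists. apply dg2; eauto.
    + eexists. apply dU1; eauto.
    + eexists. apply dU2; eauto.
  - intros r s r' s' _ _ E1 _ _ E2. auto.
  - intros r s _. exists (fun r t => t), (fun r t => r). simpl. split; [tauto|split;[tauto|]].
    unfold wedge_pb, d1, d2. rewrite DT1, DT2, DR1, DR2. lra.
  - intros r s [H1 H2]. pose proof (Hr3 r H1 H2) as Hn.
    unfold omega1_pb, wedge_pb, d1, d2. rewrite DT1, DT2, DR1, DR2.
    rewrite (DU1 a0 a1 a2 a3 r s Hn).
    rewrite (DG2 G a0 a1 a2 a3 r s Hn Ha2).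
    unfold Ufun, Df. field. auto.
  - intros r s [H1 H2]. pose proof (Hr3 r H1 H2) as Hn. pose proof (Hr0 r H1) as Hp.
    unfold omega2_pb, wedge_pb, d1, d2. rewrite DT1, DT2.
    rewrite (DU1 a0 a1 a2 a3 r s Hn).
    rewrite (DU2 a0 a1 a2 a3 r s Hn).
    rewrite (DG2 G a0 a1 a2 a3 r s Hn Ha2).
    rewrite (DG1 G a0 a1 a2 a3 r s _ Hn Ha2 (HG r H1 H2)).
    unfold Afun. pose proof (Hpos r Hp) as Hd.
    replace ((sqrt (Derive p r) / r) ^ 2) with (Derive p r / r ^ 2).
    2:{ assert (Hs := sqrt_sqrt (Derive p r) ltac:(lra)). unfold Rdiv. rewrite Rpow_mult_distr. replace (sqrt (Derive p r) ^ 2) with (sqrt (Derive p r) * sqrt (Derive p r)) by ring. rewrite Hs. rewrite pow_inv. reflexivity. }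
    unfold Ufun, Df, Nf. rewrite DR1, DR2. field. split; [auto|split;[auto|lra]].
Qed.
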